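(* Let $G=(V,E)$ be a finite graph with boundary $B\subseteq V$, $|B|\ge2$, and let $\delta_B=\min_{x\in B}\deg(x)$ be the minimum degree (in $G$) of the boundary vertices. Then $$\sigma_2(G,B)\le\frac{|B|}{|B|-1}\,\delta_B.$$
   Context: $G=(V,E)$ is a finite undirected graph. A boundary is a subset $B\subseteq V$ with $|B|\ge2$. For $f:V\to\mathbb{R}$, $f\neq0$, the Rayleigh quotient is $R(f)=\frac{\sum_{\{x,y\}\in E}(f(x)-f(y))^2}{\sum_{x\in B}f(x)^2}$, interpreted as $+\infty$ if $f$ vanishes on $B$. For $1\le k\le|B|$, the $k$-th Steklov eigenvalue is $\sigma_k(G,B)=\min_{W\subseteq\mathbb{R}^V,\dim W=k}\max_{0\ne f\in W}R(f)$, so $0=\sigma_1\le\sigma_2\le\cdots$. *)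

(* Defs.v *)
From HB Require Import structures.
From mathcomp Require Import all_boot all_order all_algebra.
From mathcomp Require Import boolp classical_sets reals constructive_ereal ereal.
Set Implicit Arguments. Unset Strict Implicit. Unset Printing Implicit Defensive.
Import Order.TTheory GRing.Theory Num.Theory.
Local Open Scope ring_scope.
Local Open Scope classical_set_scope.

(* A finite simple graph G = (V,E) is given by a symmetric irreflexive
   adjacency relation e on a finite type V; the edge {x,y} is in E iff e x y. *)

(* Dirichlet energy: sum over (unordered) edges {x,y} of (f x - f y)^2.
   Each edge is counted twice in the ordered double sum, hence the / 2. *)
Definition energy (R : realType) (V : finType) (e : rel V) (f : V -> R) : R :=
  (\sum_(x : V) \sum_(y : V | e x y) (f x - f y) ^+ 2) / 2.

Definition bnorm (R : realType) (V : finType) (B : {set V}) (f : V -> R) : R :=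
  \sum_(x in B) f x ^+ 2.

Definition rayleigh (R : realType) (V : finType) (e : rel V) (B : {set V})
  (f : V -> R) : \bar R :=
  if bnorm B f == 0 then +oo%E else (energy e f / bnorm B f)%:E.

(* k-th Steklov eigenvalue: min over k-dimensional subspaces W of R^V of the
   max of the Rayleigh quotient over nonzero f in W (as inf / sup in \bar R). *)
Definition steklov (R : realType) (V : finType) (e : rel V) (B : {set V})
  (k : nat) : \bar R :=
  ereal_inf
    ((fun W : {vspace {ffun V -> R^o}} =>
        ereal_sup
          ((fun f : {ffun V -> R^o} => rayleigh e B (fun x => (f x : R)))
             @` [set f | (f \in W) && (f != 0)]))
     @` [set W | \dim W == k]).

Definition degree (V : finType) (e : rel V) (x : V) : nat := #|[set y | e x y]|.

(* delta_B = min_{x in B} deg x  (the neutral element #|V| exceeds every degree,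
   and B is nonempty in the theorem). *)
Definition deltaB (V : finType) (e : rel V) (B : {set V}) : nat :=
  \big[minn/#|V|]_(x in B) degree e x.

(* Main.v *)
Require Import Defs.
From HB Require Import structures.
From mathcomp Require Import all_boot all_order all_algebra.
From mathcomp Require Import boolp classical_sets reals constructive_ereal ereal.
From mathcomp Require Import ring lra.
Import Order.TTheory GRing.Theory Num.Theory.
Local Open Scope ring_scope.

Lemma delta_attained (V : finType) (e : rel V) (B : {set V}) :
  (0 < #|B|)%N -> exists2 x0, x0 \in B & deltaB e B = degree e x0.
Proof.
move=> /card_gt0P [x1 x1B].
case: (arg_minnP (degree e) x1B) => x0 x0B hmin.
have {}x0B : x0 \in B by [].
exists x0 => //; apply/eqP; rewrite eqn_leq; apply/andP; split.
  rewrite /deltaB; have : x0 \in index_enum V by rewrite mem_index_enum.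
  elim: (index_enum V) => [//|y r IH]; rewrite inE big_cons.
  case/orP=> [/eqP <-|/IH h]; first by rewrite x0B geq_minl.

  by case: (y \in B) => //; apply: leq_trans (geq_minr _ _) h.
rewrite /deltaB; elim/big_ind: _.
- exact: max_card.
- by move=> a b ha hb; rewrite leq_min ha hb.
- by move=> x xB; apply: hmin.
Qed.

Lemma energy_g (R : realType) (V : finType) (e : rel V)
  (e_sym : symmetric e) (e_irr : irreflexive e) (x0 : V) (a b : R) :
  energy e (fun x => a + b * (x == x0)%:R) = b ^+ 2 * (degree e x0)%:R.
Proof.
rewrite /energy.
have step : forall x y, e x y ->
   (a + b * (x == x0)%:R - (a + b * (y == x0)%:R)) ^+ 2 =
   b ^+ 2 * (x == x0)%:R + b ^+ 2 * (y == x0)%:R.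
  move=> x y exy.
  have : ~~ ((x == x0) && (y == x0)).
    by apply: contraTN exy => /andP[/eqP -> /eqP ->]; rewrite e_irr.
  by case: (x == x0); case: (y == x0) => //= _; ring.
under eq_bigr => x _ do (under eq_bigr => y exy do rewrite step //; rewrite big_split /=).
rewrite big_split /=.
have sw : \sum_(x : V) \sum_(y | e x y) b ^+ 2 * (y == x0)%:R =
          \sum_(x : V) \sum_(y | e x y) b ^+ 2 * (x == x0)%:R.
  rewrite (exchange_big_dep xpredT) //=.
  by apply: eq_bigr => y _; apply: eq_bigl => x; rewrite e_sym.
rewrite sw.
have -> : \sum_(x : V) \sum_(y | e x y) b ^+ 2 * (x == x0)%:R = b ^+ 2 * (degree e x0)%:R.
  rewrite (bigD1 x0) //= [X in _ + X]big1 ?addr0; last first.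
    by move=> x hx; apply: big1 => y _; rewrite (negPf hx) mulr0.
  rewrite eqxx mulr1 sumr_const /degree.
  rewrite -[LHS]mulr_natr; congr (_ * _%:R).
  apply: eq_card => y; apply/idP/idP; rewrite in_setE //.
set X := _ * _%:R; lra.
Qed.

Lemma bnorm_g (R : realType) (V : finType) (B : {set V}) (x0 : V) (a b : R) :
  x0 \in B ->
  bnorm B (fun x => a + b * (x == x0)%:R) = (a + b) ^+ 2 + (#|B|%:R - 1) * a ^+ 2.
Proof.
move=> x0B; rewrite /bnorm (bigD1 x0) //= eqxx mulr1; congr (_ + _).
rewrite (eq_bigr (fun _ => a ^+ 2)); last first.
  by move=> x /andP[_ hx]; rewrite (negPf hx) mulr0 addr0.
rewrite sumr_const -[LHS]mulr_natr [LHS]mulrC; congr (_ * _).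
rewrite [in RHS](cardD1 x0) x0B add1n mulrSr addrK; congr (_%:R).
by apply: eq_card => x; rewrite !inE andbC.
Qed.

Lemma rayleigh_g (R : realType) (V : finType) (e : rel V)
  (e_sym : symmetric e) (e_irr : irreflexive e) (B : {set V}) (x0 : V) (a b : R) :
  (2 <= #|B|)%N -> x0 \in B -> (a != 0) || (b != 0) ->
  (rayleigh e B (fun x => (a + b * (x == x0)%:R)%R) <=
    ((#|B|%:R / (#|B|%:R - 1)) * (degree e x0)%:R : R)%:E)%E.
Proof.
move=> hB x0B hab.
have hn : (2 : R) <= #|B|%:R by rewrite (ler_nat R 2).
set n := (#|B|%:R : R) in hn *; set d := ((degree e x0)%:R : R).
have hd : 0 <= d by rewrite /d ler0n.
rewrite /rayleigh bnorm_g // energy_g //.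
set D := (a + b) ^+ 2 + (n - 1) * a ^+ 2.
have hD : 0 < D.
  have h1 := sqr_ge0 (a + b).
  rewrite /D; case: (eqVneq a 0) hab => [-> /= hb|ha _].
    by rewrite add0r expr0n /= mulr0 addr0 lt0r sqr_ge0 sqrf_eq0 hb.
  have h2 : 0 < a ^+ 2 by rewrite lt0r sqr_ge0 sqrf_eq0 ha.
  nra.
rewrite (gt_eqF hD) lee_fin ler_pdivrMr //.
have hn1 : n - 1 != 0 by apply/eqP => h; lra.
have key : n / (n - 1) * d * D - b ^+ 2 * d = d / (n - 1) * (n * a + b) ^+ 2.
  by rewrite /D; field.
rewrite -subr_ge0 key; apply: mulr_ge0; last exact: sqr_ge0.
by apply: divr_ge0 => //; lra.
Qed.

Theorem mainTheorem3 (R : realType) (V : finType) (e : rel V)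
  (e_sym : symmetric e) (e_irr : irreflexive e) (B : {set V})
  (hB : (2 <= #|B|)%N) :
  (steklov R e B 2 <= ((#|B|%:R / (#|B|%:R - 1)) * (deltaB e B)%:R : R)%:E)%E.
Proof.
have [x0 x0B ->] := @delta_attained V e B (leq_trans (isT : (0 < 2)%N) hB).
have [x1 x1B x10] : exists2 x1, x1 \in B & x1 != x0.
  have : (0 < #|[predD1 B & x0]|)%N.
    by move: hB; rewrite (cardD1 x0) x0B.
  by case/card_gt0P => x1; rewrite !inE => /andP[h1 h2]; exists x1.
pose f1 : {ffun V -> R^o} := [ffun _ => 1].
pose f2 : {ffun V -> R^o} := [ffun x => (x == x0)%:R].
pose W := (<<[:: f1; f2]>>)%VS.
have dimW : \dim W = 2%N.
  have : free [:: f1; f2].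
    rewrite free_cons seq1_free span_seq1; apply/andP; split.
      apply/vlineP => -[k hk].
      have := congr1 (fun g : {ffun V -> R^o} => g x1) hk.
      by rewrite /= !ffunE (negPf x10) ?mulr0n ?scaler0 ?mulr0 => /eqP; rewrite oner_eq0.
    apply/eqP => h; have := congr1 (fun g : {ffun V -> R^o} => g x0) h.
    by rewrite /= !ffunE eqxx => /eqP; rewrite oner_eq0.
  by move/eqP.
rewrite /steklov.
apply: le_trans; first by apply: ereal_inf_lbound; exists W => //=; rewrite dimW.
apply: ge_ereal_sup => _ [f /= /andP[fW fn0] <-].
move: fW; rewrite /W span_cons span_seq1 => /memv_addP[g1 /vlineP[k1 ->]].
move=> [g2 /vlineP[k2 ->] fE].
have -> : (fun x => (f x : R)) = (fun x => (k1 + k2 * (x == x0)%:R)%R).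
  by apply: funext => x; rewrite fE !ffunE -[k1%:A]/(k1 * 1) mulr1.
apply: (@rayleigh_g R V e e_sym e_irr B x0 k1 k2) => //.
case: (eqVneq k1 0) => [h1|//]; case: (eqVneq k2 0) => [h2|]; last by rewrite orbT.
by move: fn0; rewrite fE h1 h2 !scale0r addr0 eqxx.
Qed.
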